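(* Let $\gamma_n:[0,1]\to\mathbb{R}^d$ be curves in $W^{2,2}([0,1];\mathbb{R}^d)$, each with constant positive speed $|\gamma_n'|$, converging uniformly to a curve $\gamma:[0,1]\to\mathbb{R}^d$, and assume $$\sup_n|\gamma_n'|<+\infty,\qquad \sup_n\int_0^1|\kappa_{\gamma_n}|^2\,ds<+\infty.$$ Then $L(\gamma)=\lim_{n\to\infty}L(\gamma_n)$.
   Context: For a curve $\gamma$, $L(\gamma)$ denotes its length, i.e. its total variation $\sup\sum_j|\gamma(t_j)-\gamma(t_{j-1})|$ over partitions of $[0,1]$. For a constant-speed curve $\gamma_n$ with speed $|\gamma_n'|>0$, its curvature is $\kappa_{\gamma_n}=|\gamma_n'|^{-1}\frac{d}{ds}\big(\frac{\gamma_n'}{|\gamma_n'|}\big)=\gamma_n''/|\gamma_n'|^2$. *)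

(* Defs.v *)
From HB Require Import structures.
From mathcomp Require Import all_boot all_order all_algebra.
From mathcomp Require Import all_classical all_reals all_analysis.
Set Implicit Arguments. Unset Strict Implicit. Unset Printing Implicit Defensive.
Import Order.TTheory GRing.Theory Num.Theory.
Import numFieldNormedType.Exports.
Local Open Scope classical_set_scope.
Local Open Scope ring_scope.

Section Defs.
Variables (R : realType) (d : nat).
Notation V := 'rV[R]_d.

Definition enorm (v : V) : R := Num.sqrt (\sum_(i < d) v ord0 i ^+ 2).

Definition comp (f : R -> V) (i : 'I_d) : R -> R := fun t => f t ord0 i.

Definition primitive01 (f F : R -> V) : Prop :=
  forall i : 'I_d,
    (@lebesgue_measure R).-integrable `[0%R, 1%R] (fun x => (comp f i x)%:E) /\
    forall t, 0 <= t <= 1 ->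
      (comp F i t)%:E = (comp F i 0)%:E +
        (\int[@lebesgue_measure R]_(x in `[0%R, t]) (comp f i x)%:E)%E.

(* gamma in W^{2,2}([0,1];R^d), with g1 = gamma' (continuous representative)
   and g2 = gamma'' (an L^2 representative) *)
Definition W22 (gamma g1 g2 : R -> V) : Prop :=
  primitive01 g1 gamma /\ primitive01 g2 g1 /\
  forall i : 'I_d,
    (@lebesgue_measure R).-integrable `[0%R, 1%R] (fun x => (comp g2 i x ^+ 2)%:E).

(* int_0^1 |kappa|^2 ds with kappa = gamma'' / |gamma'|^2 *)
Definition curv_energy (g1 g2 : R -> V) : \bar R :=
  (\int[@lebesgue_measure R]_(x in `[0%R, 1%R])
     ((enorm (g2 x) / enorm (g1 x) ^+ 2) ^+ 2)%:E)%E.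

Definition partition01 (n : nat) (t : nat -> R) : Prop :=
  t 0%N = 0 /\ t n = 1 /\ forall j, (j < n)%N -> t j <= t j.+1.

Definition var_sum (gamma : R -> V) (n : nat) (t : nat -> R) : R :=
  \sum_(j < n) enorm (gamma (t j.+1) - gamma (t j)).

Definition curve_length (gamma : R -> V) : \bar R :=
  ereal_sup [set x | exists n t, partition01 n t /\ x = (var_sum gamma n t)%:E].

End Defs.

(* Main.v *)
Require Import Defs.
From HB Require Import structures.
From mathcomp Require Import all_boot all_order all_algebra.
From mathcomp Require Import all_classical all_reals all_analysis.
From mathcomp Require Import ring lra measurable_realfun.
Import Order.TTheory GRing.Theory Num.Theory.
Import numFieldNormedType.Exports.
Local Open Scope classical_set_scope.
Local Open Scope ring_scope.
Section S1.
Context {R : realType}.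
Notation mu := (@lebesgue_measure R).
Notation RT := (measurableTypeR R).

Lemma intRD {D : set RT} (mD : measurable D) {f g : R -> R} :
  mu.-integrable D (EFin \o f) -> mu.-integrable D (EFin \o g) ->
  mu.-integrable D (EFin \o (fun x => f x + g x)).
Proof.
move=> hf hg; have := integrableD mD hf hg.
by apply: (eq_integrable mD) => x _; rewrite /= EFinD.
Qed.

Lemma intRZ {D : set RT} (mD : measurable D) (k : R) {f : R -> R} :
  mu.-integrable D (EFin \o f) ->
  mu.-integrable D (EFin \o (fun x => k * f x)).
Proof.
move=> hf; have := integrableZl mD k hf.
by apply: (eq_integrable mD) => x _; rewrite /= EFinM.
Qed.

Lemma intRN {D : set RT} (mD : measurable D) {f : R -> R} :
  mu.-integrable D (EFin \o f) ->
  mu.-integrable D (EFin \o (fun x => - f x)).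
Proof.
move=> hf; have := integrableN hf.
by apply: (eq_integrable mD) => x _; rewrite /= EFinN.
Qed.

Lemma Rint_sum (I : eqType) {D : set RT} (mD : measurable D) (s : seq I) (F : I -> R -> R) :
  (forall i, mu.-integrable D (EFin \o F i)) ->
  mu.-integrable D (EFin \o (fun x => \sum_(i <- s) F i x)) /\
  \int[mu]_(x in D) (\sum_(i <- s) F i x) = \sum_(i <- s) \int[mu]_(x in D) F i x.
Proof.
move=> hF; elim: s => [|a s [IH1 IH2]].
  rewrite big_nil; under eq_fun do rewrite big_nil.
  split; first exact: integrable0.
  by rewrite Rintegral_cst// mul0r.
have E : (fun x => \sum_(i <- a :: s) F i x) = (fun x => F a x + \sum_(i <- s) F i x).
  by apply: funext => x; rewrite big_cons.
rewrite E big_cons; split.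
  exact: (intRD mD (hF a) IH1).
by rewrite RintegralD// IH2.
Qed.

Lemma integrable_itv_cst (s t : R) (k : R) :
  mu.-integrable (`[s, t] : set RT) (EFin \o (fun _ => k)).
Proof.
apply/integrableP; split; first exact/measurable_EFinP/measurable_cst.
rewrite (eq_integral (cst `|k|%:E)); last by move=> x _; rewrite /=. 
rewrite integral_cst//.
have := lebesgue_measure_itv `[s, t]%R => /= ->.
case: ifP => _; rewrite ?mule0 ?ltry// -EFinD -EFinM; exact: ltry.
Qed.

Lemma Rint_cst_itv (s t k : R) : s <= t ->
  \int[mu]_(x in (`[s, t] : set RT)) k = k * (t - s).
Proof.
move=> st; rewrite Rintegral_cst//.
have := lebesgue_measure_itv `[s, t]%R => /= ->.
rewrite lte_fin; case: ltgtP st => //.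
by move=> -> _; rewrite subrr mulr0.
Qed.
End S1.
Section S2.
Context {R : realType}.
Notation mu := (@lebesgue_measure R).
Notation RT := (measurableTypeR R).

Lemma int_sub01 (f : R -> R) (s t : R) : 0 <= s -> t <= 1 ->
  mu.-integrable (`[0, 1] : set RT) (EFin \o f) ->
  mu.-integrable (`[s, t] : set RT) (EFin \o f).
Proof.
move=> s0 t1 hf; apply: integrableS hf => //.
by apply: subset_itv; rewrite bnd_simp.
Qed.

Lemma prim_diff (f F : R -> R) :
  mu.-integrable (`[0, 1] : set RT) (fun x => (f x)%:E) ->
  (forall t, 0 <= t <= 1 -> (F t)%:E = (F 0)%:E +
        (\int[mu]_(x in `[0%R, t]) (f x)%:E)%E) ->
  forall s t, 0 <= s -> s <= t -> t <= 1 ->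
  F t - F s = \int[mu]_(x in (`[s, t] : set RT)) f x.
Proof.
move=> hf hF.
have key : forall t, 0 <= t <= 1 -> F t = F 0 + \int[mu]_(x in (`[0, t] : set RT)) f x.
  move=> t /andP[t0 t1]; have := hF t; rewrite t0 t1 => /(_ isT).
  have ht : mu.-integrable (`[0, t] : set RT) (EFin \o f) by exact: int_sub01.
  rewrite -(fineK (integrable_fin_num _ ht)) //= -EFinD => -[->].
  by [].
move=> s t s0 st t1.
rewrite (key t); last by rewrite (le_trans s0 st) t1.
rewrite (key s); last by rewrite s0 (le_trans st t1).
rewrite opprD addrACA subrr add0r.
have ht : mu.-integrable (`[0, t] : set RT) (EFin \o f).
  exact: int_sub01.
rewrite (@Rintegral_itvB _ f (BLeft 0) (BRight t) s) //.
rewrite Rintegral_itv_obnd_cbnd //.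
apply: integrableS ht => //.
by apply: subset_itv; rewrite bnd_simp.
Qed.

Lemma Rint_CS (f : R -> R) (s t : R) : s < t ->
  mu.-integrable (`[s, t] : set RT) (EFin \o f) ->
  mu.-integrable (`[s, t] : set RT) (EFin \o (fun x => f x ^+ 2)) ->
  (\int[mu]_(x in (`[s, t] : set RT)) f x) ^+ 2 <=
  (t - s) * \int[mu]_(x in (`[s, t] : set RT)) (f x ^+ 2).
Proof.
move=> st hf hf2.
set X := \int[mu]_(x in _) f x; set A := \int[mu]_(x in _) (f x ^+ 2).
have mI : measurable (`[s, t] : set RT) by [].
have bnd : forall l, 0 < l -> `|X| <= A / (2 * l) + l * (t - s) / 2.
  move=> l l0.
  have hg : mu.-integrable (`[s, t] : set RT)
      (EFin \o (fun x => (2 * l)^-1 * f x ^+ 2 + l / 2)).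
    apply: intRD => //; first exact: intRZ.
    exact: integrable_itv_cst.
  have E : \int[mu]_(x in (`[s, t] : set RT)) ((2 * l)^-1 * f x ^+ 2 + l / 2)
       = A / (2 * l) + l * (t - s) / 2.
    rewrite RintegralD //; first last.
      exact: integrable_itv_cst.
      exact: intRZ.
    rewrite RintegralZl // Rint_cst_itv ?ltW //.
    by rewrite /A mulrC; congr (_ + _); rewrite mulrAC.
  have pt : forall x, `|f x| <= (2 * l)^-1 * f x ^+ 2 + l / 2.
    move=> x.
    have : 0 <= (`|f x| - l) ^+ 2 / (2 * l) by apply: divr_ge0; [exact: sqr_ge0|lra].
    rewrite -[f x ^+ 2]real_normK ?num_real //.
    move=> h.
    have E2 : (`|f x| - l) ^+ 2 / (2 * l) = (2 * l)^-1 * `|f x| ^+ 2 + l / 2 - `|f x|.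
      by field; lra.
    by rewrite E2 subr_ge0 in h.
  rewrite -E; case: (lerP 0 X) => X0.
    rewrite ger0_norm //; apply: le_Rintegral => // x xI.
    exact: le_trans (ler_norm _) (pt x).
  have hN := intRN mI hf.
  have -> : `|X| = \int[mu]_(x in (`[s, t] : set RT)) (- f x).
    rewrite ltr0_norm // /X -mulN1r -RintegralZl //.
    by apply: eq_Rintegral => x _; rewrite mulN1r.
  apply: le_Rintegral => // x xI.
  by apply: le_trans (pt x); rewrite -normrN ler_norm.
have A0 : 0 <= A by apply: Rintegral_ge0 => x _; exact: sqr_ge0.
have [X0|X0] := eqVneq X 0.
  by rewrite X0 expr0n /= mulr_ge0 // subr_ge0 ltW.
have nX : 0 < `|X| by rewrite normr_gt0.
have h0 : 0 < t - s by rewrite subr_gt0.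
have := bnd (`|X| / (t - s)) (divr_gt0 nX h0).
rewrite -[X ^+ 2]real_normK ?num_real //.
move: nX h0; set a := `|X|; set h := t - s => nX h0 H.
have H2 : a <= A * h / (2 * a) + a / 2.
  move: H; congr (_ <= _ + _); field.
  by rewrite !gt_eqF.
  by rewrite !gt_eqF.
have a2 : 0 <= 2 * a by rewrite mulr_ge0 // ltW.
have := ler_wpM2l a2 H2.
have -> : 2 * a * (A * h / (2 * a) + a / 2) = A * h + a * a.
  by field; rewrite gt_eqF.
move=> H3.
have : a * a <= A * h by lra.
by rewrite expr2 [h * _]mulrC.
Qed.
End S2.
Section S3.
Context {R : realType} {d : nat}.
Notation V := 'rV[R]_d.
Implicit Types u v w x y : V.

Lemma enorm_ge0 v : 0 <= enorm v.
Proof. exact: sqrtr_ge0. Qed.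

Lemma sumsq_ge0 v : 0 <= \sum_(i < d) v ord0 i ^+ 2.
Proof. by apply: sumr_ge0 => i _; exact: sqr_ge0. Qed.

Lemma enorm_sq v : enorm v ^+ 2 = \sum_(i < d) v ord0 i ^+ 2.
Proof. by rewrite /enorm sqr_sqrtr // sumsq_ge0. Qed.

Definition dot u v : R := \sum_(i < d) u ord0 i * v ord0 i.

Lemma dot_self u : dot u u = enorm u ^+ 2.
Proof. by rewrite enorm_sq /dot; apply: eq_bigr => i _; rewrite expr2. Qed.

Lemma enorm0_comp {u : V} : enorm u = 0 -> forall i, u ord0 i = 0.
Proof.
move=> h i; have : \sum_(i < d) u ord0 i ^+ 2 = 0 by rewrite -enorm_sq h expr0n.
move/eqP; rewrite psumr_eq0; last by move=> j _; exact: sqr_ge0.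
by move/allP/(_ i (mem_index_enum _)) => /= /eqP /eqP; rewrite sqrf_eq0 => /eqP.
Qed.

Lemma CS u v : dot u v <= enorm u * enorm v.
Proof.
have [a0|a0] := eqVneq (enorm u) 0.
  rewrite a0 mul0r /dot big1 // => i _; by rewrite (enorm0_comp a0) mul0r.
have [b0|b0] := eqVneq (enorm v) 0.
  rewrite b0 mulr0 /dot big1 // => i _; by rewrite (enorm0_comp b0) mulr0.
set a := enorm u; set b := enorm v.
have ap : 0 < a by rewrite lt0r a0 enorm_ge0.
have bp : 0 < b by rewrite lt0r b0 enorm_ge0.
have H : 2 * dot u v <= b / a * a ^+ 2 + a / b * b ^+ 2.
  have Ea : a ^+ 2 = \sum_(i < d) u ord0 i ^+ 2 by rewrite /a enorm_sq.
  have Eb : b ^+ 2 = \sum_(i < d) v ord0 i ^+ 2 by rewrite /b enorm_sq.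
  rewrite Ea Eb !mulr_sumr -big_split /=. 
  apply: ler_sum => i _.
  set p := u ord0 i; set q := v ord0 i.
  have : 0 <= (b * p - a * q) ^+ 2 / (a * b) by apply: divr_ge0; [exact: sqr_ge0 | exact: ltW (mulr_gt0 ap bp)].
  have -> : (b * p - a * q) ^+ 2 / (a * b) = b / a * p ^+ 2 + a / b * q ^+ 2 - 2 * (p * q).
    by field; rewrite !gt_eqF.
  by rewrite subr_ge0.
rewrite (_ : b / a * a ^+ 2 + a / b * b ^+ 2 = 2 * (a * b)) in H; last first.
  by field; rewrite !gt_eqF.
lra.
Qed.

Lemma sumsq_add x y : \sum_(i < d) (x + y) ord0 i ^+ 2 =
  \sum_(i < d) x ord0 i ^+ 2 + 2 * dot x y + \sum_(i < d) y ord0 i ^+ 2.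
Proof.
rewrite /dot mulr_sumr -!big_split /=; apply: eq_bigr => i _.
by rewrite mxE; ring.
Qed.

Lemma enorm_triangle x y : enorm (x + y) <= enorm x + enorm y.
Proof.
have h0 : 0 <= enorm x + enorm y by rewrite addr_ge0 // enorm_ge0.
rewrite -(ler_pXn2r (n := 2)) // ?nnegrE ?enorm_ge0 //.
rewrite enorm_sq sumsq_add -!enorm_sq.
have := CS x y; nra.
Qed.

Lemma enormN v : enorm (- v) = enorm v.
Proof. by rewrite /enorm; congr Num.sqrt; apply: eq_bigr => i _; rewrite mxE sqrrN. Qed.

Lemma enormB_sym x y : enorm (x - y) = enorm (y - x).
Proof. by rewrite -enormN opprB. Qed.

Lemma polar x y : enorm (x - y) ^+ 2 = enorm x ^+ 2 + enorm y ^+ 2 - 2 * dot x y.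
Proof.
rewrite !enorm_sq /dot mulr_sumr -big_split -sumrB /=; apply: eq_bigr => i _.
by rewrite !mxE; ring.
Qed.

Lemma CS_unit w u : enorm u = 1 -> dot w u <= enorm w.
Proof. by move=> u1; have := CS w u; rewrite u1 mulr1. Qed.

End S3.
Section S4.
Context {R : realType}.
Notation mu := (@lebesgue_measure R).
Notation RT := (measurableTypeR R).

Lemma Rint_subset_le (f : R -> R) (s t : R) : 0 <= s -> t <= 1 ->
  mu.-integrable (`[0, 1] : set RT) (EFin \o f) ->
  (forall x, 0 <= f x) ->
  \int[mu]_(x in (`[s, t] : set RT)) f x <= \int[mu]_(x in (`[0, 1] : set RT)) f x.
Proof.
move=> s0 t1 hf f0.
have hst : mu.-integrable (`[s, t] : set RT) (EFin \o f) by exact: int_sub01.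
rewrite /Rintegral fine_le //; first exact: integrable_fin_num hst.
  exact: integrable_fin_num hf.
apply: ge0_subset_integral => //.
- by case/integrableP: hf.
- by move=> x _; rewrite lee_fin.
- by apply: subset_itv; rewrite bnd_simp.
Qed.

Lemma in01 {s t x : R} : 0 <= s -> t <= 1 -> (`[s, t]%classic : set RT) x -> 0 <= x <= 1.
Proof.
move=> s0 t1; rewrite /= in_itv /= => /andP[sx xt].
by rewrite (le_trans s0 sx) (le_trans xt t1).
Qed.

Lemma initv {s t x : R} : (`[s, t]%classic : set RT) x -> s <= x <= t.
Proof. by rewrite /= in_itv. Qed.

End S4.

Section S5.
Context {R : realType} {d : nat}.
Notation mu := (@lebesgue_measure R).
Notation RT := (measurableTypeR R).
Notation V := 'rV[R]_d.

Variables (gam v a : R -> V) (c : R).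
Hypothesis hW : W22 gam v a.
Hypothesis c0 : 0 < c.
Hypothesis hc : forall t, 0 <= t <= 1 -> enorm (v t) = c.

Lemma gam_diff i s t : 0 <= s -> s <= t -> t <= 1 ->
  (gam t - gam s) ord0 i = \int[mu]_(x in (`[s, t] : set RT)) Defs.comp v i x.
Proof.
move=> s0 st t1; rewrite !mxE.
have [h1 h2] := hW.1 i.
exact: (prim_diff _ _ h1 h2).
Qed.

Lemma v_diff i s t : 0 <= s -> s <= t -> t <= 1 ->
  (v t - v s) ord0 i = \int[mu]_(x in (`[s, t] : set RT)) Defs.comp a i x.
Proof.
move=> s0 st t1; rewrite !mxE.
have [h1 h2] := hW.2.1 i.
exact: (prim_diff _ _ h1 h2).
Qed.

Lemma int_v i {s t} : 0 <= s -> t <= 1 ->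
  mu.-integrable (`[s, t] : set RT) (EFin \o Defs.comp v i).
Proof. by move=> s0 t1; apply: int_sub01 => //; exact: (hW.1 i).1. Qed.

Lemma int_a i {s t} : 0 <= s -> t <= 1 ->
  mu.-integrable (`[s, t] : set RT) (EFin \o Defs.comp a i).
Proof. by move=> s0 t1; apply: int_sub01 => //; exact: (hW.2.1 i).1. Qed.

Lemma int_a2 i {s t} : 0 <= s -> t <= 1 ->
  mu.-integrable (`[s, t] : set RT) (EFin \o (fun x => Defs.comp a i x ^+ 2)).
Proof. by move=> s0 t1; apply: int_sub01 => //; exact: (hW.2.2 i). Qed.

Lemma dot_int (p : V) {s t} : 0 <= s -> s <= t -> t <= 1 ->
  mu.-integrable (`[s, t] : set RT) (EFin \o (fun x => dot (v x) p)) /\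
  dot (gam t - gam s) p = \int[mu]_(x in (`[s, t] : set RT)) dot (v x) p.
Proof.
move=> s0 st t1.
have mI : measurable (`[s, t] : set RT) by [].
have hF : forall i : 'I_d, mu.-integrable (`[s, t] : set RT)
    (EFin \o (fun x => p ord0 i * Defs.comp v i x)).
  by move=> i; apply: intRZ => //; exact: int_v.
have [H1 H2] := Rint_sum _ mI (index_enum (ordinal d)) _ hF.
split.
  by apply: (eq_integrable mI) H1 => x _ /=; congr EFin; apply: eq_bigr => i _; rewrite mulrC.
rewrite /dot; under eq_Rintegral do under eq_bigr do rewrite mulrC.
rewrite [LHS](_ : _ = \sum_(i < d) p ord0 i * (gam t - gam s) ord0 i); last first.
  by apply: eq_bigr => i _; rewrite mulrC.
transitivity (\sum_(i <- index_enum 'I_d) \int[mu]_(x in (`[s, t] : set RT)) (p ord0 i * Defs.comp v i x)).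
  apply: eq_bigr => i _; rewrite gam_diff // RintegralZl //; exact: int_v.
by rewrite -H2.
Qed.

Lemma enorm0 : enorm (0 : V) = 0.
Proof. by rewrite /enorm big1 ?sqrtr0 // => i _; rewrite mxE expr0n. Qed.

Lemma upper s t : 0 <= s -> s <= t -> t <= 1 ->
  enorm (gam t - gam s) <= c * (t - s).
Proof.
move=> s0 st t1.
set w := gam t - gam s.
have [H1 H2] := dot_int w s0 st t1.
have : enorm w ^+ 2 <= enorm w * c * (t - s).
  rewrite -dot_self.
  have -> : dot w w = \int[mu]_(x in (`[s, t] : set RT)) dot (v x) w.
    by rewrite -H2.
  rewrite -Rint_cst_itv //.
  apply: le_Rintegral => //; first exact: integrable_itv_cst.
  move=> x xI; have /hc hx := in01 s0 t1 xI.
  by rewrite -hx mulrC; apply: CS.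
have w0 := enorm_ge0 w.
have h0 : 0 <= c * (t - s) by rewrite mulr_ge0 ?subr_ge0 // ltW.
rewrite -mulrA.
move: w0 h0; set e := enorm w; set k := c * (t - s) => w0 h0 H.
rewrite leNgt; apply/negP => ke.
have e0 : 0 < e by exact: le_lt_trans h0 ke.
have : e * k < e * e by rewrite ltr_pM2l.
by rewrite -expr2 ltNge H.
Qed.

Definition Ea := \sum_(i < d) \int[mu]_(x in (`[0, 1] : set RT)) (Defs.comp a i x ^+ 2).

Lemma Ea_ge0 : 0 <= Ea.
Proof. by apply: sumr_ge0 => i _; apply: Rintegral_ge0 => x _; exact: sqr_ge0. Qed.

Lemma vdiff_bound {s t x} : 0 <= s -> s <= x -> x <= t -> t <= 1 ->
  enorm (v x - v s) ^+ 2 <= (t - s) * Ea.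
Proof.
move=> s0 sx xt t1.
have [<-|sx'] := eqVneq s x.
  by rewrite subrr enorm0 expr0n /= mulr_ge0 ?Ea_ge0 // subr_ge0 (le_trans sx xt).
have sx2 : s < x by rewrite lt_neqAle sx' sx.
have x1 : x <= 1 := le_trans xt t1.
rewrite enorm_sq /Ea mulr_sumr; apply: ler_sum => i _.
rewrite v_diff //.
apply: le_trans (Rint_CS _ _ _ sx2 (int_a i s0 x1) (int_a2 i s0 x1)) _.
apply: ler_pM.
- by rewrite subr_ge0.
- by apply: Rintegral_ge0 => y _; exact: sqr_ge0.
- by rewrite lerD2r.
- apply: Rint_subset_le => //; first exact: (hW.2.2 i).
  by move=> y; exact: sqr_ge0.
Qed.

Lemma lower s t : 0 <= s -> s <= t -> t <= 1 ->
  (t - s) * (c ^+ 2 - (t - s) * Ea / 2) <= c * enorm (gam t - gam s).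
Proof.
move=> s0 st t1.
have s1 : 0 <= s <= 1 by rewrite s0 (le_trans st t1).
have [H1 H2] := dot_int (v s) s0 st t1.
apply: (@le_trans _ _ (dot (gam t - gam s) (v s))); last first.
  by rewrite mulrC -(hc _ s1); exact: CS.
rewrite H2 mulrC -Rint_cst_itv //.
apply: le_Rintegral => //; first exact: integrable_itv_cst.
move=> x xI; have /hc hx := in01 s0 t1 xI.
have /andP[sx xt] := initv xI.
have hp := polar (v x) (v s).
rewrite hx (hc _ s1) in hp.
have hb := vdiff_bound s0 sx xt t1.
lra.
Qed.

Lemma Ea_bound K : (curv_energy v a <= K%:E)%E -> Ea <= K * c ^+ 4.
Proof.
move=> hK.
have mI : measurable (`[0, 1] : set RT) by [].
have hF : forall i : 'I_d, mu.-integrable (`[0, 1] : set RT)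
    (EFin \o (fun x => Defs.comp a i x ^+ 2)) by move=> i; exact: (hW.2.2 i).
have [H1 H2] := Rint_sum _ mI (index_enum (ordinal d)) _ hF.
have H3 := intRZ mI (c ^+ 4)^-1 H1.
have c4 : 0 < c ^+ 4 by rewrite exprn_gt0.
have E1 : curv_energy v a = ((c ^+ 4)^-1 * Ea)%:E.
  rewrite /curv_energy.
  transitivity (\int[mu]_(x in (`[0%R, 1%R] : set RT)) (EFin \o (fun x => ((c ^+ 4)^-1 * \sum_(i < d) Defs.comp a i x ^+ 2)%R)) x)%E.
    apply: eq_integral => x; rewrite inE => /(in01 (lexx 0) (lexx 1)) x01.
    by rewrite /= hc // expr_div_n enorm_sq -exprM mulrC.
  rewrite -(fineK (integrable_fin_num _ H3)) //.
  congr EFin; rewrite -/(Rintegral _ _ _) RintegralZl // H2.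
  by [].
rewrite E1 lee_fin in hK.
have := ler_wpM2l (ltW c4) hK.
by rewrite mulrA divrr ?unitfE ?gt_eqF // mul1r mulrC.
Qed.

End S5.
Section S6.
Context {R : realType} {d : nat}.
Notation V := 'rV[R]_d.

Lemma part_mono {n} {t : nat -> R} : partition01 n t ->
  forall j k, (j <= k)%N -> (k <= n)%N -> t j <= t k.
Proof.
move=> [_ [_ ht]] j k; elim: k => [|k IH].
  by rewrite leqn0 => /eqP -> _.
rewrite leq_eqVlt => /orP[/eqP -> //|jk] kn.
apply: le_trans (IH jk (ltnW kn)) _; exact: ht.
Qed.

Lemma part_in {n} {t : nat -> R} : partition01 n t ->
  forall j, (j <= n)%N -> 0 <= t j <= 1.
Proof.
move=> hp j jn; have [h0 [h1 _]] := hp.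
by rewrite -{1}h0 -h1 !(part_mono hp) //.
Qed.

Lemma reverse_tri (x y : V) : `|enorm x - enorm y| <= enorm (x - y).
Proof.
have h1 : enorm x <= enorm y + enorm (x - y).
  by have := enorm_triangle y (x - y); rewrite addrC subrK.
have h2 : enorm y <= enorm x + enorm (x - y).
  by have := enorm_triangle x (y - x); rewrite addrC subrK enormB_sym.
rewrite ler_norml; apply/andP; split; lra.
Qed.

Lemma var_close (f g : R -> V) (e : R) n t : partition01 n t ->
  (forall x, 0 <= x <= 1 -> enorm (f x - g x) <= e) ->
  `|var_sum f n t - var_sum g n t| <= n%:R * (2 * e).
Proof.
move=> hp he.
rewrite /var_sum -sumrB.
apply: le_trans (ler_norm_sum _ _ _) _.
have -> : n%:R * (2 * e) = \sum_(j < n) (2 * e).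
  by rewrite sumr_const card_ord mulr_natl.
apply: ler_sum => j _.
apply: le_trans (reverse_tri _ _) _.
have -> : f (t j.+1) - f (t j) - (g (t j.+1) - g (t j)) =
   (f (t j.+1) - g (t j.+1)) + (g (t j) - f (t j)).
  by rewrite opprB addrACA [RHS]addrACA (addrC (- g _)).
apply: le_trans (enorm_triangle _ _) _.
have -> : 2 * e = e + e by ring.
rewrite [enorm (g _ - f _)]enormB_sym; apply: lerD; apply: he; apply: (part_in hp).
- by [].
- exact: ltnW.
Qed.

End S6.
Section S7.
Context {R : realType} {d : nat}.
Notation V := 'rV[R]_d.

Definition unif (m : nat) (j : nat) : R := j%:R / m%:R.

Lemma unif_part {m} : (0 < m)%N -> partition01 m (unif m).
Proof.
move=> m0; have m0' : (m%:R : R) != 0 by rewrite pnatr_eq0 -lt0n.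
split; first by rewrite /unif mul0r.
split; first by rewrite /unif divff.
move=> j _; rewrite /unif ler_pM2r ?invr_gt0 ?ltr0n // ler_nat; exact: leqnSn.
Qed.

Lemma unif_step {m} j : (0 < m)%N -> unif m j.+1 - unif m j = m%:R^-1.
Proof.
move=> m0; rewrite /unif -mulrBl -natrB // subSnn mul1r //.
Qed.

Variables (gam v a : R -> V) (c : R).
Hypothesis hW : W22 gam v a.
Hypothesis c0 : 0 < c.
Hypothesis hc : forall t, 0 <= t <= 1 -> enorm (v t) = c.

Lemma var_upper n t : partition01 n t -> var_sum gam n t <= c.
Proof.
move=> hp; have [h0 [h1 _]] := hp.
apply: (@le_trans _ _ (\sum_(j < n) c * (t j.+1 - t j))).
  apply: ler_sum => j _; apply: (upper _ _ _ _ hW c0 hc).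
  - by have /andP[] := part_in hp _ (ltnW (ltn_ord j)).
  - by apply: (part_mono hp) => //.
  - by have /andP[] := part_in hp _ (ltn_ord j).
rewrite -mulr_sumr -(big_mkord xpredT (fun j => t j.+1 - t j)) telescope_sumr //.
by rewrite h0 h1 subr0 mulr1.
Qed.

Lemma var_lower m : (0 < m)%N ->
  c - Ea a / (2 * c * m%:R) <= var_sum gam m (unif m).
Proof.
move=> m0; have hp := unif_part m0.
have mp : (0 : R) < m%:R by rewrite ltr0n.
have H : \sum_(j < m) (m%:R^-1 * (c ^+ 2 - m%:R^-1 * Ea a / 2)) <= c * var_sum gam m (unif m).
  rewrite /var_sum [X in _ <= X]mulr_sumr; apply: ler_sum => j _.
  rewrite -(unif_step j m0).
  apply: (lower _ _ _ _ hW hc).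
  - by have /andP[] := part_in hp _ (ltnW (ltn_ord j)).
  - by apply: (part_mono hp) => //.
  - by have /andP[] := part_in hp _ (ltn_ord j).
rewrite sumr_const card_ord -mulr_natr in H.
rewrite -(ler_pM2l c0).
apply: le_trans H.
rewrite le_eqVlt; apply/orP; left; apply/eqP.
by field; rewrite !gt_eqF.
Qed.

Lemma var_lower_e {e} : 0 < e -> exists m, (0 < m)%N /\ c - e < var_sum gam m (unif m).
Proof.
move=> e0; set X := Ea a / (2 * c * e).
exists (Num.truncn X).+1; split => //.
have hX := truncnS_gt X.
set m := (Num.truncn X).+1 in hX *.
apply: lt_le_trans (var_lower _ (ltn0Sn _)).
rewrite ltrD2l ltrN2.
have mp : (0 : R) < m%:R by rewrite ltr0n.
have E0 : 0 <= Ea a by exact: Ea_ge0.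
rewrite ltr_pdivrMr ?mulr_gt0 //.
move: hX; rewrite /X ltr_pdivrMr ?mulr_gt0 //.
move=> h; apply: (lt_le_trans h); rewrite /m le_eqVlt; apply/orP; left; apply/eqP; ring.
Qed.

Lemma length_eq : curve_length gam = c%:E.
Proof.
apply/eqP; rewrite eq_le; apply/andP; split.
  apply: ge_ereal_sup => _ [n [t [hp ->]]]; rewrite lee_fin; exact: var_upper.
apply/lee_addgt0Pr => e e0.
have [m [m0 hm]] := var_lower_e e0.
apply: (@le_trans _ _ ((var_sum gam m (unif m))%:E + e%:E)).
  by rewrite -EFinD lee_fin; lra.
rewrite leeD2r //; apply: ereal_sup_ubound.
by exists m, (unif m); split => //; exact: unif_part.
Qed.

End S7.
Theorem lemma2p2 (R : realType) (d : nat)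
  (gam g1 g2 : nat -> R -> 'rV[R]_d) (gamma : R -> 'rV[R]_d) :
  (forall n, W22 (gam n) (g1 n) (g2 n)) ->
  (forall n, exists2 c : R, 0 < c &
     forall t, 0 <= t <= 1 -> enorm (g1 n t) = c) ->
  (forall e : R, 0 < e -> \forall n \near \oo,
     forall t, 0 <= t <= 1 -> enorm (gam n t - gamma t) < e) ->
  (exists M : R, forall n t, 0 <= t <= 1 -> enorm (g1 n t) <= M) ->
  (exists K : R, forall n, (curv_energy (g1 n) (g2 n) <= K%:E)%E) ->
  (fun n => curve_length (gam n)) @ \oo --> curve_length gamma.
Proof.
move=> hW hcn hconv [M hM] [K hK].
have [cn hcn'] : {cn : nat -> R & forall n, 0 < cn n /\
    forall t, 0 <= t <= 1 -> enorm (g1 n t) = cn n}.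
  apply: (@choice _ _ (fun n c => 0 < c /\ forall t, 0 <= t <= 1 -> enorm (g1 n t) = c)) => n.
  by have [c c0 hc] := hcn n; exists c.
have c0 n : 0 < cn n := (hcn' n).1.
have hc n : forall t, 0 <= t <= 1 -> enorm (g1 n t) = cn n := (hcn' n).2.
have lenE : (fun n => curve_length (gam n)) = (fun n => (cn n)%:E).
  by apply: funext => n; exact: (length_eq _ _ _ _ (hW n) (c0 n) (hc n)).
rewrite lenE.
have i01 : 0 <= (0 : R) <= 1 by rewrite lexx ler01.
have cM n : cn n <= M by rewrite -(hc n 0 i01); exact: hM.
have M0 : 0 < M by exact: lt_le_trans (c0 0%N) (cM 0%N).
have K0 : 0 <= K.
  have h := Ea_bound _ _ _ _ (hW 0%N) (c0 0%N) (hc 0%N) K (hK 0%N).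
  have := le_trans (Ea_ge0 (g2 0%N)) h.
  by rewrite pmulr_lge0 // exprn_gt0.
set B := K * M ^+ 3.
have varlow n m : (0 < m)%N -> cn n - B / (2 * m%:R) <= var_sum (gam n) m (unif m).
  move=> m0; apply: le_trans (var_lower _ _ _ _ (hW n) (c0 n) (hc n) m m0).
  rewrite lerD2l lerN2.
  have h := Ea_bound _ _ _ _ (hW n) (c0 n) (hc n) K (hK n).
  have mp : (0 : R) < m%:R by rewrite ltr0n.
  have cp := c0 n.
  have c3 : cn n ^+ 3 <= M ^+ 3.
    have cp' : 0 <= cn n by exact: ltW.
    have h2 : cn n * cn n <= M * M by apply: ler_pM; [exact: cp'|exact: cp'|exact: cM|exact: cM].
    have h3 : cn n * cn n * cn n <= M * M * M.
      by apply: ler_pM; [exact: mulr_ge0|exact: cp'|exact: h2|exact: cM].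
    have -> : cn n ^+ 3 = cn n * cn n * cn n by ring.
    have -> : M ^+ 3 = M * M * M by ring.
    exact: h3.
  have : Ea (g2 n) <= B * cn n.
    apply: le_trans h _.
    rewrite /B -mulrA ler_wpM2l // (_ : cn n ^+ 4 = cn n ^+ 3 * cn n); last by rewrite -exprSr.
    by rewrite ler_wpM2r // ltW.
  move=> hE.
  rewrite ler_pdivrMr ?mulr_gt0 //.
  rewrite (_ : B / (2 * m%:R) * (2 * cn n * m%:R) = B * cn n) //.
  by field; rewrite !gt_eqF.
set S := [set x | exists n t, partition01 n t /\ x = (var_sum gamma n t)%:E].
have near_ex : forall e : R, 0 < e -> exists N, forall t, 0 <= t <= 1 -> enorm (gamma t - gam N t) <= e.
  move=> e e0; have [N _ HN] := hconv e e0; exists N => t ht.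
  by rewrite enormB_sym; apply: ltW; apply: (HN N) => //=.
have ubS : forall n t, partition01 n t -> var_sum gamma n t <= M.
  move=> n t hp; apply/ler_addgt0Pr => e e0.
  have np : (0 : R) < n%:R + 1 by rewrite ltr_wpDl // ler0n.
  set e' := e / (2 * (n%:R + 1)).
  have e'0 : 0 < e' by rewrite divr_gt0 // mulr_gt0.
  have [N hN] := near_ex e' e'0.
  have h1 := var_close _ _ _ _ _ hp hN.
  have h2 := var_upper _ _ _ _ (hW N) (c0 N) (hc N) _ _ hp.
  move: h1; rewrite ler_norml => /andP[_ h1].
  have : n%:R * (2 * e') <= e.
    rewrite /e' (_ : n%:R * (2 * (e / (2 * (n%:R + 1)))) = e * n%:R / (n%:R + 1)); last first.
      by field; rewrite gt_eqF.
    rewrite ler_pdivrMr //; nra.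
  have := cM N; lra.
have var_ge0 n t : 0 <= var_sum gamma n t.
  by apply: sumr_ge0 => j _; exact: enorm_ge0.
have inS n t : partition01 n t -> ((var_sum gamma n t)%:E <= curve_length gamma)%E.
  by move=> hp; apply: ereal_sup_ubound; exists n, t.
have lM : (curve_length gamma <= M%:E)%E.
  by apply: ge_ereal_sup => _ [n [t [hp ->]]]; rewrite lee_fin; exact: ubS.
have l0 : (0%:E <= curve_length gamma)%E.
  apply: le_trans (inS 1%N (unif 1) (unif_part (ltn0Sn 0))).
  by rewrite lee_fin.
have lfin : curve_length gamma \is a fin_num.
  by rewrite ge0_fin_numE // (le_lt_trans lM) // ltry.
set L := fine (curve_length gamma).
have hl : curve_length gamma = L%:E by rewrite fineK.
rewrite hl.
apply: cvg_EFin; first by apply: nearW => n.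
apply/cvgrPdist_lt => e e0.
set e3 := e / 3.
have e30 : 0 < e3 by rewrite divr_gt0.
have he3 : e = 3 * e3 by rewrite /e3; field.
clearbody e3.
have [m [m0 hm]] : exists m, (0 < m)%N /\ B / (2 * m%:R) <= e3.
  exists (Num.truncn (B / e3)).+1; split => //.
  have hX := truncnS_gt (B / e3).
  set m := (Num.truncn (B / e3)).+1 in hX *.
  have mp : (0 : R) < m%:R by rewrite ltr0n.
  have B0 : 0 <= B by rewrite /B mulr_ge0 // exprn_ge0 // ltW.
  rewrite ler_pdivrMr ?mulr_gt0 //.
  move: hX; rewrite ltr_pdivrMr // => hX.
  nra.
have hlt : ((L - e3)%:E < ereal_sup S)%E.
  by rewrite -/(curve_length gamma) hl lte_fin; lra.
have [_ [n0 [t0 [hp0 ->]]] hy] := ereal_sup_gt hlt.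
rewrite lte_fin in hy.
have mn : (0 : R) < m%:R + n0%:R + 1 by rewrite ltr_wpDl // addr_ge0 // ler0n.
set e' := e3 / (2 * (m%:R + n0%:R + 1)).
have e'0 : 0 < e' by rewrite divr_gt0 // mulr_gt0.
have A6 : m%:R * (2 * e') <= e3 /\ n0%:R * (2 * e') <= e3.
  have E : 2 * e' = e3 / (m%:R + n0%:R + 1) by rewrite /e'; field; rewrite gt_eqF.
  rewrite E !mulrA !ler_pdivrMr //.
  have : (0 : R) <= n0%:R by rewrite ler0n.
  have : (0 : R) <= m%:R by rewrite ler0n.
  move=> hm0 hn0; split; nra.
apply: filterS (hconv e' e'0) => n hn.
have hN : forall t, 0 <= t <= 1 -> enorm (gamma t - gam n t) <= e'.
  by move=> t ht; rewrite enormB_sym; apply: ltW; exact: hn.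
have A1 := var_close _ _ _ _ _ hp0 hN.
have A2 := var_close _ _ _ _ _ (unif_part m0) hN.
have A3 := var_upper _ _ _ _ (hW n) (c0 n) (hc n) _ _ hp0.
have A4 := varlow n m m0.
have A5 : var_sum gamma m (unif m) <= L.
  by rewrite -lee_fin -hl; exact: inS (unif_part m0).
move: A1 A2; rewrite !ler_norml => /andP[A1a A1b] /andP[A2a A2b].
case: A6 => A6a A6b.
rewrite /= ltr_norml; apply/andP; split; lra.
Qed.
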